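(* Let $i\in\{3\frac{1}{2},4,5\}$ and let $X$ be a locally connected locally compact $T_i$-space. Then the partially ordered set $(\mathscr{Y}_i(X),\leq)$ of all $T_i$ one-point connectifications of $X$ is a compact conditionally complete lattice.
   Context: Conventions: $T_{3\frac12}$ = completely regular and $T_1$; $T_4$ = normal and $T_1$; $T_5$ = hereditarily normal (every subspace normal) and $T_1$. A one-point connectification of $X$ is a connected space $Y$ containing $X$ as a dense subspace with $Y\setminus X$ a singleton; two are identified if there is a homeomorphism between them fixing every point of $X$. $\mathscr{Y}_i(X)$ is the set of (equivalence classes of) $T_i$ one-point connectifications of $X$, ordered by $Y_1\leq Y_2$ iff there is a continuous map $f:Y_2\to Y_1$ fixing every point of $X$. A conditionally complete lattice is a partially ordered set in which every non-empty bounded subset has a least upper bound and a greatest lower bound. A conditionally complete lattice $\mathscr{L}$ is compact if for every subset $\mathscr{H}\subseteq\mathscr{L}$ with no least upper bound there is a finite subset $\mathscr{H}'\subseteq\mathscr{H}$ which also has no least upper bound. *)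

(* Defs.v *)
From HB Require Import structures.
From mathcomp Require Import all_boot all_order all_algebra.
From mathcomp Require Import all_classical all_reals all_analysis.
From mathcomp Require Import Rstruct Rstruct_topology.
From Stdlib Require Import Rdefinitions.

Set Implicit Arguments.
Unset Strict Implicit.
Unset Printing Implicit Defensive.

Import Order.TTheory GRing.Theory Num.Theory.
Local Open Scope classical_set_scope.
Local Open Scope ring_scope.

Definition completely_regular (T : topologicalType) : Prop :=
  forall (B : set T) (a : T), closed B -> ~ B a ->
    exists f : T -> Rdefinitions.R,
      [/\ continuous f, (forall y, 0 <= f y <= 1), f a = 0
        & forall y, B y -> f y = 1].

Definition hereditarily_normal (T : topologicalType) : Prop :=
  forall (S B C : set T),
    (exists2 F, closed F & B = S `&` F) ->
    (exists2 F, closed F & C = S `&` F) ->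
    B `&` C = set0 ->
    exists U V : set T,
      [/\ open U, open V, B `<=` S `&` U, C `<=` S `&` V
        & (S `&` U) `&` (S `&` V) = set0].

Inductive sep_index := T3half | T4 | T5.

Definition is_T (i : sep_index) (T : topologicalType) : Prop :=
  match i with
  | T3half => completely_regular T /\ accessible_space T
  | T4 => normal_space T /\ accessible_space T
  | T5 => hereditarily_normal T /\ accessible_space T
  end.

Definition locally_connected_space (T : topologicalType) : Prop :=
  forall (x : T) (U : set T), nbhs x U ->
    exists V : set T, [/\ open V, V x, connected V & V `<=` U].

Record otop (T : choiceType) := OTop {
  otop_op : set_system T;
  otop_T : otop_op setT;
  otop_I : setI_closed otop_op;
  otop_U : forall (I : Type) (f : I -> set T),
      (forall i, otop_op (f i)) -> otop_op (\bigcup_i f i) }.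

Definition ospace (T : choiceType) (t : otop T) : Type := T.

HB.instance Definition _ (T : choiceType) (t : otop T) :=
  Choice.on (ospace t).
HB.instance Definition _ (T : choiceType) (t : otop T) :=
  isOpenTopological.Build (ospace t) (@otop_T T t) (@otop_I T t) (@otop_U T t).

(** A one-point connectification of [X] is represented by a topology [t] on
   [option X]: [Some x] is the point [x] of [X] and [None] is the added point.
   Two one-point connectifications that are homeomorphic by a homeomorphism
   fixing [X] pointwise give the same topology on [option X] (such a
   homeomorphism is the identity), so equivalence classes correspond exactly
   to topologies. *)

Definition one_point_connectification (i : sep_index) (X : topologicalType)
    (t : otop (option X)) : Prop :=
  [/\
      (forall U : set X,
         open U <-> exists2 V : set (ospace t), open V & U = Some @^-1` V),
      dense (range (fun x : X => (Some x : ospace t))),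
      connected [set: ospace t]
    &
      is_T i (ospace t)].

Definition Yi (i : sep_index) (X : topologicalType) : set (otop (option X)) :=
  [set t | one_point_connectification i t].
Arguments Yi i X : clear implicits.

Definition conn_le (X : topologicalType) (t1 t2 : otop (option X)) : Prop :=
  exists f : ospace t2 -> ospace t1,
    continuous f /\ forall x : X, f (Some x) = Some x.

Section OrderNotions.
Variables (T : Type) (le : T -> T -> Prop) (P : set T).

Definition partial_order_on : Prop :=
  [/\ forall a, P a -> le a a,
      forall a b c, P a -> P b -> P c -> le a b -> le b c -> le a c
    & forall a b, P a -> P b -> le a b -> le b a -> a = b].

Definition is_upper_bound (H : set T) (u : T) : Prop :=
  P u /\ forall h, H h -> le h u.
Definition is_lower_bound (H : set T) (u : T) : Prop :=
  P u /\ forall h, H h -> le u h.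

Definition is_lub (H : set T) (s : T) : Prop :=
  is_upper_bound H s /\ forall v, is_upper_bound H v -> le s v.
Definition is_glb (H : set T) (s : T) : Prop :=
  is_lower_bound H s /\ forall v, is_lower_bound H v -> le v s.

Definition has_lub (H : set T) : Prop := exists s, is_lub H s.

Definition conditionally_complete_lattice : Prop :=
  [/\ partial_order_on,
      (forall H, H `<=` P -> H !=set0 -> (exists u, is_upper_bound H u) ->
         has_lub H)
    & (forall H, H `<=` P -> H !=set0 -> (exists u, is_lower_bound H u) ->
         exists s, is_glb H s)].

Definition compact_cc_lattice : Prop :=
  conditionally_complete_lattice /\
  forall H, H `<=` P -> ~ has_lub H ->
    exists2 H', finite_set H' & H' `<=` H /\ ~ has_lub H'.

End OrderNotions.

(* Main.v *)
Require Import Defs.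
From HB Require Import structures.
From mathcomp Require Import all_boot all_order all_algebra.
From mathcomp Require Import all_classical all_reals all_analysis.
From mathcomp Require Import Rstruct Rstruct_topology.
From mathcomp.algebra_tactics Require Import ring lra.

Set Warnings "-all".
Set Implicit Arguments.
Unset Strict Implicit.
Unset Printing Implicit Defensive.
Import Order.TTheory GRing.Theory Num.Theory.
Local Open Scope classical_set_scope.
Local Open Scope ring_scope.

Definition finer (X : topologicalType) (t1 t2 : otop (option X)) :=
  forall V, otop_op t1 V -> otop_op t2 V.

Definition wit (X : topologicalType) (H : set (otop (option X)))
  (s : seq (otop (option X) * set (option X))) :=
  forall p, List.In p s -> [/\ H p.1, otop_op p.1 p.2 & p.2 None].

Definition icap (X : topologicalType) (s : seq (otop (option X) * set (option X)))
  : set (option X) := fun y => forall p, List.In p s -> p.2 y.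

Definition supop (X : topologicalType) (H : set (otop (option X))) :
  set_system (option X) := fun V =>
  open (Some @^-1` V : set X) /\ (V None -> exists2 s, wit H s & icap s `<=` V).

Definition lift (X : Type) (U : set X) : set (option X) :=
  fun y => match y with Some x => U x | None => False end.

Lemma supopT (X : topologicalType) (H : set (otop (option X))) : supop H setT.
Proof.
split; first by rewrite preimage_setT; exact: openT.
by move=> _; exists nil.
Qed.

Lemma supopI (X : topologicalType) (H : set (otop (option X))) :
  setI_closed (supop H).
Proof.
move=> A B; rewrite /supop => -[oA hA] [oB hB]; split; first by rewrite preimage_setI; exact: openI.
move=> [/hA [s1 w1 c1] /hB [s2 w2 c2]]; exists (s1 ++ s2).
  by move=> p /(List.in_app_or _ _ _) [/w1|/w2].
move=> y hy; split.
  by apply: c1 => p Hp; apply: hy; apply: List.in_or_app; left.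
by apply: c2 => p Hp; apply: hy; apply: List.in_or_app; right.
Qed.

Lemma supopU (X : topologicalType) (H : set (otop (option X))) :
  forall (I : Type) (f : I -> set (option X)),
      (forall i, supop H (f i)) -> supop H (\bigcup_i f i).
Proof.
move=> I f hf; split.
  by rewrite preimage_bigcup; apply: bigcup_open => i _; exact: (hf i).1.
move=> [i _ fi]; have [s w c] := (hf i).2 fi; exists s => // y /c fy.
by exists i.
Qed.

Definition Stop (X : topologicalType) (H : set (otop (option X))) :
  otop (option X) := OTop (supopT H) (@supopI X H) (@supopU X H).

Lemma Yi_emb i (X : topologicalType) t : Yi i X t ->
  forall U : set X, open U <-> exists2 V, otop_op t V & U = Some @^-1` V.
Proof. by case. Qed.

Lemma Yi_dense i (X : topologicalType) t : Yi i X t ->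
  dense (range (fun x : X => (Some x : ospace t))).
Proof. by case. Qed.

Lemma Yi_conn i (X : topologicalType) t : Yi i X t ->
  connected [set: ospace t].
Proof. by case. Qed.

Lemma Yi_T i (X : topologicalType) t : Yi i X t -> is_T i (ospace t).
Proof. by case. Qed.

Lemma Yi_T1 i (X : topologicalType) t : Yi i X t -> accessible_space (ospace t).
Proof. by move/Yi_T; case: i => -[]. Qed.

Lemma nonefree i (X : topologicalType) t (V : set (option X)) : Yi i X t ->
  open (Some @^-1` V : set X) -> ~ V None -> otop_op t V.
Proof.
move=> hY oV nV; have [V' oV' eV] := (Yi_emb hY _).1 oV.
have cl : closed ([set None] : set (ospace t)).
  exact: accessible_closed_set1 (Yi_T1 hY) None.
have -> : V = V' `&` ~` [set None].
  apply/seteqP; split => -[x|] //=.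
  - by move=> Vx; split => //; have : (Some @^-1` V) x by []; rewrite eV.
  - by move=> [Vx _]; have : (Some @^-1` V') x by []; rewrite -eV.
  - by move=> [_ /(_ erefl)].
exact: (@openI (ospace t)) oV' (closed_openC cl).
Qed.

Lemma icap_open (X : topologicalType) (u : otop (option X)) s :
  (forall p, List.In p s -> otop_op u p.2) -> otop_op u (icap s).
Proof.
elim: s => [|a s IH] h.
  have -> : icap (nil : seq (otop (option X) * set (option X))) = setT.
    by apply/seteqP; split => // y _ p [].
  exact: (@openT (ospace u)).
have -> : icap (a :: s) = a.2 `&` icap s.
  apply/seteqP; split => y.
    by move=> hy; split; [apply: hy; left | move=> p Hp; apply: hy; right].
  by move=> [ha hs] p [<-|Hp] //; exact: hs.
apply: (@openI (ospace u)); first by apply: h; left.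
by apply: IH => p Hp; apply: h; right.
Qed.

Lemma uopen i (X : topologicalType) (H : set (otop (option X))) u s V :
  Yi i X u -> (forall p, List.In p s -> otop_op u p.2) -> supop H V ->
  icap s None -> (V None -> icap s `<=` V) -> otop_op u V.
Proof.
move=> hY hs [oV _] sN hV; have [VN|nVN] := pselect (V None); last first.
  exact: nonefree hY oV nVN.
have -> : V = (V `&` ~` [set None]) `|` icap s.
  apply/seteqP; split => y.
    by case: y => [x|] Vy; [left; split|right].
  by move=> [[]//|/(hV VN)].
apply: (@openU (ospace u)); last exact: icap_open.
apply: nonefree hY _ _; last by move=> [_ /(_ erefl)].
rewrite preimage_setI.
have -> : Some @^-1` (~` [set None]) = [set: X] by apply/seteqP; split.
by rewrite setIT.
Qed.

Lemma le_of_finer (X : topologicalType) (t1 t2 : otop (option X)) :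
  finer t1 t2 -> conn_le t1 t2.
Proof.
move=> h; exists id; split => //.
by apply/continuousP => A oA; exact: h.
Qed.

Definition sep2 (T : topologicalType) := forall a b : T, a <> b ->
  exists U V : set T, [/\ open U, open V, U a, V b & U `&` V = set0].

Definition sepcl (T : topologicalType) := forall A B : set T,
  closed A -> closed B -> A `&` B = set0 ->
  exists U V : set T, [/\ open U, open V, A `<=` U, B `<=` V & U `&` V = set0].

Lemma sep2_of_sepcl (T : topologicalType) :
  accessible_space T -> sepcl T -> sep2 T.
Proof.
move=> hT hs a b ab.
have ab0 : [set a] `&` [set b] = set0.
  by apply/seteqP; split => // x [/= xa xb]; apply: ab; rewrite -xa -xb.
have [U [V [oU oV aU bV UV]]] := hs _ _ (@accessible_closed_set1 _ hT a)
  (@accessible_closed_set1 _ hT b) ab0.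
by exists U, V; split => //; [exact: aU | exact: bV].
Qed.

Lemma sep2_of_cr (T : topologicalType) :
  accessible_space T -> completely_regular T -> sep2 T.
Proof.
move=> hT hc a b ab.
have [f [cf _ fa fb]] := hc [set b] a (@accessible_closed_set1 _ hT b) (fun e => ab e).
exists (f @^-1` [set x | x < 1/2]), (f @^-1` [set x | x > 1/2]); split.
- move/continuousP : cf; apply; exact: open_lt.
- move/continuousP : cf; apply; exact: open_gt.
- by rewrite /= fa; lra.
- by rewrite /= fb //; lra.
- rewrite -subset0 => x [h1 h2]; move: h1 h2 => /= h1 h2.
  have : f x < f x by apply: lt_trans h2.
  by rewrite ltxx.
Qed.

Lemma Yi_sep2 i (X : topologicalType) t : Yi i X t -> sep2 (ospace t).
Proof.
move/Yi_T; case: i => /= -[h1 h2].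
- exact: sep2_of_cr.
- by apply: sep2_of_sepcl => //; exact/(@normal_openP Rdefinitions.R).
- apply: sep2_of_sepcl => // A B cA cB AB.
  have [U [V [oU oV AU BV UV]]] := h1 setT A B (ex_intro2 _ _ A cA (esym (setTI A)))
    (ex_intro2 _ _ B cB (esym (setTI B))) AB.
  exists U, V; split => //.
  + by move=> x /AU [].
  + by move=> x /BV [].
  + by move: UV; rewrite !setTI.
Qed.

Lemma finer_of_le i (X : topologicalType) (t1 t2 : otop (option X)) :
  Yi i X t1 -> Yi i X t2 -> conn_le t1 t2 -> finer t1 t2.
Proof.
move=> h1 h2 [f [cf fS]].
have fN : f None = None.
  case E: (f None) => [x0|] //; exfalso.
  have hs := Yi_sep2 h2.
  have [A [B [oA oB Ax0 BN AB]]] := hs (Some x0) None (fun e => ltac:(discriminate e)).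
  have oO : otop_op t1 (lift (fun x => A (Some x))).
    apply: nonefree h1 _ _ => //.
    by apply/(Yi_emb h2 _).2; exists A.
  have oP := (proj1 (continuousP f)) cf _ oO.
  have hd := Yi_dense h2.
  case: (hd (f @^-1` lift (fun x => A (Some x)) `&` B)).
  - by exists None; split => //=; rewrite E.
  - exact: (@openI (ospace t2)).
  move=> y [[/= Py By] [x _ yx]]; subst y; move: Py; rewrite fS /= => Ax.
  by have : (A `&` B) (Some x) by []; rewrite AB.
move=> V oV; have := (proj1 (continuousP f)) cf _ oV.
have -> // : f @^-1` V = V.
by apply/seteqP; split => -[x|] /=; rewrite ?fS ?fN.
Qed.

Lemma otop_ext (T : choiceType) (t1 t2 : otop T) :
  (forall V, otop_op t1 V <-> otop_op t2 V) -> t1 = t2.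
Proof.
case: t1 => o1 T1 I1 U1; case: t2 => o2 T2 I2 U2 /= h.
have e : o1 = o2 by apply/funext => V; apply/propext; exact: h.
subst o2; f_equal; apply: Prop_irrelevance.
Qed.

Lemma finer_S i (X : topologicalType) (H : set (otop (option X))) t :
  H `<=` Yi i X -> H t -> finer t (Stop H).
Proof.
move=> HY Ht V oV; split.
  by apply/(Yi_emb (HY _ Ht) _).2; exists V.
move=> VN; exists [:: (t, V)].
  by move=> p [<-|[]].
by move=> y hy; exact: (hy (t, V) (or_introl erefl)).
Qed.

Lemma S_emb (X : topologicalType) (H : set (otop (option X))) :
  forall U : set X, open U <-> exists2 V, otop_op (Stop H) V & U = Some @^-1` V.
Proof.
move=> U; split.
  by move=> oU; exists (lift U) => //; split.
by move=> [V [oV _] ->].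
Qed.

Definition UBcond i (X : topologicalType) (H : set (otop (option X))) :=
  forall s, wit H s -> exists2 u, Yi i X u & forall p, List.In p s -> finer p.1 u.

Lemma wit_icapN (X : topologicalType) (H : set (otop (option X))) s :
  wit H s -> icap s None.
Proof. by move=> w p /w []. Qed.

Lemma wit_u_open (X : topologicalType) (H : set (otop (option X))) s u :
  wit H s -> (forall p, List.In p s -> finer p.1 u) ->
  forall p, List.In p s -> otop_op u p.2.
Proof. by move=> w hf p Hp; have [_ o _] := w p Hp; exact: hf Hp _ o. Qed.

Lemma S_dense i (X : topologicalType) (H : set (otop (option X))) :
  UBcond i H -> dense (range (fun x : X => (Some x : ospace (Stop H)))).
Proof.
move=> hU O [[x|] Oy] oO.
  by exists (Some x); split => //; exists x.
have [s w c] := oO.2 Oy.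
have [u Yu fu] := hU s w.
have hd := Yi_dense Yu.
case: (hd (icap s)).
- by exists None; exact: wit_icapN w.
- exact: icap_open (wit_u_open w fu).
by move=> z [/c Oz Rz]; exists z.
Qed.

Lemma S_conn i (X : topologicalType) (H : set (otop (option X))) :
  UBcond i H -> connected [set: ospace (Stop H)].
Proof.
move=> hU B B0 [C oC BC] [D cD BD].
rewrite setTI in BC; rewrite setTI in BD; subst C D.
have oB : supop H B := oC.
have oNB : supop H (~` B) := closed_openC cD.
have key : forall s, wit H s -> (B None -> icap s `<=` B) ->
  ((~` B) None -> icap s `<=` ~` B) -> B = setT.
  move=> s w h1 h2; have [u Yu fu] := hU s w.
  have hs := wit_u_open w fu; have sN := wit_icapN w.
  have uB : otop_op u B := uopen Yu hs oB sN h1.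
  have uNB : otop_op u (~` B) := uopen Yu hs oNB sN h2.
  have hc := Yi_conn Yu.
  apply: (hc B B0).
    by exists B => //; rewrite setTI.
  by exists B; [rewrite -openC | rewrite setTI].
have [BN|nBN] := pselect (B None).
  have [s w c] := oB.2 BN; apply: (key s w) => // /(_ BN).
have [s w c] := oNB.2 nBN; apply: (key s w) => // /(_ nBN).
Qed.

Lemma S_T1 i (X : topologicalType) (H : set (otop (option X))) t0 :
  H `<=` Yi i X -> H t0 -> accessible_space (ospace (Stop H)).
Proof.
move=> HY H0 x y xy; have [A [oA xA yA]] := Yi_T1 (HY _ H0) xy.
by exists A; split => //; exact: finer_S HY H0 _ oA.
Qed.

Lemma cont_finer (X : topologicalType) (t s : otop (option X))
  (f : option X -> Rdefinitions.R) :
  finer t s -> continuous (f : ospace t -> Rdefinitions.R) ->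
  continuous (f : ospace s -> Rdefinitions.R).
Proof.
move=> hf /continuousP cf; apply/continuousP => A oA; exact: hf _ (cf A oA).
Qed.

Lemma crList i (X : topologicalType) (H : set (otop (option X))) s :
  H `<=` Yi i X -> (forall t, H t -> completely_regular (ospace t)) -> wit H s ->
  exists f : option X -> Rdefinitions.R,
    [/\ continuous (f : ospace (Stop H) -> Rdefinitions.R),
        (forall y, 0 <= f y <= 1), f None = 0 & forall y, ~ icap s y -> f y = 1].
Proof.
move=> HY hcr; elim: s => [|[t W] s IH] w.
  exists (fun=> 0); split => //.
  - exact: cst_continuous.
  - by move=> y; rewrite lexx ler01.
  - by move=> y h; exfalso; apply: h => p [].
have [Ht oW WN] := w (t, W) (or_introl erefl).
have [g [cg gb g0 g1]] := IH (fun p Hp => w p (or_intror Hp)).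
have cW : closed (~` W : set (ospace t)) by exact: open_closedC.
have [f [cf fb f0 f1]] := hcr t Ht (~` W) None cW (fun h => h WN).
have cf' := cont_finer (finer_S HY Ht) cf.
pose F : ospace (Stop H) -> Rdefinitions.R := f.
pose G : ospace (Stop H) -> Rdefinitions.R := g.
have hE : forall y, (F + G - F \* G) y = f y + g y - f y * g y by [].
exists (F + G - F \* G); split.
- move=> y; apply: (@continuousB _ Rdefinitions.R^o).
    apply: (@continuousD _ Rdefinitions.R^o); [exact: cf' | exact: cg].
  apply: continuousM; [exact: cf' | exact: cg].
- move=> y; rewrite hE; move: (fb y) (gb y) => /andP[f0y f1y] /andP[g0y g1y].
  have h1 : 0 <= g y * (1 - f y) by apply: mulr_ge0 => //; rewrite subr_ge0.
  have h2 : 0 <= (1 - g y) * (1 - f y) by apply: mulr_ge0; rewrite subr_ge0.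
  by apply/andP; split; nra.
- by rewrite hE f0 g0 mulr0 subr0 addr0.
- move=> y hy; rewrite hE; have [Wy|nWy] := pselect (W y).
    rewrite g1; first by ring.
    move=> hs; apply: hy => p [<-|Hp] //; exact: hs.
  by rewrite f1 //; ring.
Qed.

Lemma S_cr i (X : topologicalType) (H : set (otop (option X))) t0 :
  H `<=` Yi i X -> H t0 -> (forall t, H t -> completely_regular (ospace t)) ->
  completely_regular (ospace (Stop H)).
Proof.
move=> HY H0 hcr B a cB nBa.
have oNB : supop H (~` B) := closed_openC cB.
case: a nBa => [x|] nBa.
  have oO : otop_op t0 (lift (fun x => ~ B (Some x))).
    by apply: nonefree (HY _ H0) _ _ => //; exact: oNB.1.
  have cO : closed (~` lift (fun x => ~ B (Some x)) : set (ospace t0)).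
    exact: open_closedC.
  have [f [cf fb f0 f1]] := hcr t0 H0 _ (Some x) cO (fun h => h nBa).
  exists f; split => //.
    exact: cont_finer (finer_S HY H0) cf.
  move=> y By; apply: f1; case: y By => [z|] //= Bz h; exact: h.
have [s w c] := oNB.2 nBa.
have [f [cf fb f0 f1]] := crList HY hcr w.
exists f; split => // y By; apply: f1 => /c; exact.
Qed.

Definition hn_at (T : topologicalType) (S : set T) :=
  forall B C : set T,
    (exists2 F, closed F & B = S `&` F) ->
    (exists2 F, closed F & C = S `&` F) ->
    B `&` C = set0 ->
    exists U V : set T,
      [/\ open U, open V, B `<=` S `&` U, C `<=` S `&` V
        & (S `&` U) `&` (S `&` V) = set0].

Definition reg_none (X : topologicalType) (t : otop (option X)) :=
  forall W, otop_op t W -> W None -> exists W' K,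
    [/\ otop_op t W', W' None, closed (Some @^-1` K : set X), W' `<=` K & K `<=` W].

Lemma reg_of i (X : topologicalType) t : Yi i X t -> sepcl (ospace t) -> reg_none t.
Proof.
move=> hY hs W oW WN.
have cA : closed ([set None] : set (ospace t)) by exact: accessible_closed_set1 (Yi_T1 hY) None.
have cB : closed (~` W : set (ospace t)) by exact: open_closedC.
have AB : [set None] `&` ~` W = set0.
  by apply/seteqP; split => // y [/= -> h]; exact: h.
have [U [V [oU oV AU BV UV]]] := hs _ _ cA cB AB.
exists U, (~` V); split => //.
- exact: AU.
- rewrite -preimage_setC closedC; apply/(Yi_emb hY _).2; by exists V.
- move=> y Uy Vy; have : (U `&` V) y by []. by rewrite UV.
- move=> y nVy; apply: contrapT => nWy; exact: nVy (BV _ nWy).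
Qed.

Lemma regList (X : topologicalType) (H : set (otop (option X))) s :
  (forall t, H t -> reg_none t) -> wit H s ->
  exists2 s', wit H s' & exists K : set (option X),
    [/\ closed (Some @^-1` K : set X), icap s' `<=` K & K `<=` icap s].
Proof.
move=> reg; elim: s => [|[t W] s IH] w.
  exists nil => //; exists setT; split => //; try exact: closedT.
  by move=> y _ p [].
have [Ht oW WN] := w (t, W) (or_introl erefl).
have [s' w' [K [cK c1 c2]]] := IH (fun p Hp => w p (or_intror Hp)).
have [W' [K' [oW' W'N cK' s1 s2]]] := reg t Ht W oW WN.
exists ((t, W') :: s').
  by move=> p [<-|Hp] //; exact: w'.
exists (K' `&` K); split.
- by rewrite preimage_setI; exact: closedI.
- move=> y hy; split; first by apply: s1; apply: (hy (t, W')); left.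
  by apply: c1 => p Hp; apply: hy; right.
- by move=> y [k1 k2] p [<-|Hp]; [exact: s2 | exact: c2].
Qed.

Lemma clpre (X : topologicalType) (H : set (otop (option X))) F :
  closed (F : set (ospace (Stop H))) -> closed (Some @^-1` F : set X).
Proof.
move=> cF; rewrite -openC preimage_setC.
have h : supop H (~` F) := closed_openC cF.
exact: h.1.
Qed.

Lemma lift_open (X : topologicalType) (H : set (otop (option X))) (U : set X) :
  open U -> otop_op (Stop H) (lift U).
Proof. by move=> oU; split. Qed.

Lemma oneside i (X : topologicalType) (H : set (otop (option X))) Z F1 F2 :
  H `<=` Yi i X -> (forall t, H t -> reg_none t) ->
  hn_at (Some @^-1` Z : set X) ->
  closed (F1 : set (ospace (Stop H))) -> closed (F2 : set (ospace (Stop H))) ->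
  (Z `&` F1) `&` (Z `&` F2) = set0 -> Z None -> F1 None ->
  exists U V : set (ospace (Stop H)),
    [/\ open U, open V, Z `&` F1 `<=` Z `&` U, Z `&` F2 `<=` Z `&` V
      & (Z `&` U) `&` (Z `&` V) = set0].
Proof.
move=> HY reg hX cF1 cF2 BC ZN F1N.
have nF2N : ~ F2 None.
  move=> h; have : ((Z `&` F1) `&` (Z `&` F2)) None by split; split.
  by rewrite BC.
have oNF2 : supop H (~` F2) := closed_openC cF2.
have [s w c] := oNF2.2 nF2N.
have [s' w' [K [cK c1 c2]]] := regList reg w.
have dj : (Some @^-1` Z `&` (Some @^-1` F1 `|` Some @^-1` K)) `&`
          (Some @^-1` Z `&` Some @^-1` F2) = set0.
  apply/seteqP; split => // x [[Zx [F1x|Kx]] [_ F2x]].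
    have : ((Z `&` F1) `&` (Z `&` F2)) (Some x) by split; split.
    by rewrite BC.
  exact: (c _ (c2 _ Kx)) F2x.
have [U' [V' [oU' oV' BU CV UV]]] := hX _ _
  (ex_intro2 _ _ _ (closedU (clpre cF1) cK) erefl)
  (ex_intro2 _ _ _ (clpre cF2) erefl) dj.
exists (lift U' `|` icap s'), (lift V'); split.
- apply: (@openU (ospace (Stop H))); first exact: lift_open.
  apply: icap_open => p Hp; have [Hp1 op _] := w' p Hp.
  exact: finer_S HY Hp1 _ op.
- exact: lift_open.
- move=> [x|] [Zy F1y]; split => //.
    by left; have [] := BU x (conj Zy (or_introl F1y)).
  by right; exact: wit_icapN w'.
- move=> [x|] [Zy F2y]; last by exfalso; exact: nF2N F2y.
  by split => //; have [] := CV x (conj Zy F2y).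
- apply/seteqP; split => // -[x|] [[Zx Ux] [_ Vx]] //.
  have U'x : U' x.
    case: Ux => [//|Kx].
    by have [] := BU x (conj Zx (or_intror (c1 _ Kx))).
  have : ((Some @^-1` Z `&` U') `&` (Some @^-1` Z `&` V')) x by split; split.
  by rewrite UV.
Qed.

Lemma GenSep i (X : topologicalType) (H : set (otop (option X))) Z :
  H `<=` Yi i X -> (forall t, H t -> reg_none t) ->
  hn_at (Some @^-1` Z : set X) -> hn_at (Z : set (ospace (Stop H))).
Proof.
move=> HY reg hX B C [F1 cF1 ->] [F2 cF2 ->] BC.
have [[ZN F1N]|n1] := pselect (Z None /\ F1 None).
  exact: oneside HY reg hX cF1 cF2 BC ZN F1N.
have [[ZN F2N]|n2] := pselect (Z None /\ F2 None).
  have BC' : (Z `&` F2) `&` (Z `&` F1) = set0 by rewrite setIC.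
  have [U [V [oU oV h1 h2 h3]]] := oneside HY reg hX cF2 cF1 BC' ZN F2N.
  by exists V, U; split => //; rewrite setIC.
have dj : (Some @^-1` Z `&` Some @^-1` F1) `&` (Some @^-1` Z `&` Some @^-1` F2) = set0.
  apply/seteqP; split => // x [[Zx F1x] [_ F2x]].
  have : ((Z `&` F1) `&` (Z `&` F2)) (Some x) by split; split.
  by rewrite BC.
have [U' [V' [oU' oV' BU CV UV]]] := hX _ _
  (ex_intro2 _ _ _ (clpre cF1) erefl) (ex_intro2 _ _ _ (clpre cF2) erefl) dj.
exists (lift U'), (lift V'); split; try exact: lift_open.
- move=> [x|] [Zy F1y]; last by exfalso; exact: n1.
  by split => //; have [] := BU x (conj Zy F1y).
- move=> [x|] [Zy F2y]; last by exfalso; exact: n2.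
  by split => //; have [] := CV x (conj Zy F2y).
- apply/seteqP; split => // -[x|] [[Zx Ux] [_ Vx]] //.
  have : ((Some @^-1` Z `&` U') `&` (Some @^-1` Z `&` V')) x by split; split.
  by rewrite UV.
Qed.

Lemma hn_setT_of_sepcl (T : topologicalType) : sepcl T -> hn_at (setT : set T).
Proof.
move=> hs B C [F1 cF1 ->] [F2 cF2 ->] BC.
rewrite !setTI in BC *.
have [U [V [oU oV h1 h2 h3]]] := hs _ _ cF1 cF2 BC.
by exists U, V; split => //; rewrite ?setTI.
Qed.

Lemma sepcl_of_hn_setT (T : topologicalType) : hn_at (setT : set T) -> sepcl T.
Proof.
move=> h A B cA cB AB.
have [U [V [oU oV AU BV UV]]] := h A B (ex_intro2 _ _ A cA (esym (setTI A)))
    (ex_intro2 _ _ B cB (esym (setTI B))) AB.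
exists U, V; split => //.
- by move=> x /AU [].
- by move=> x /BV [].
- by move: UV; rewrite !setTI.
Qed.

Lemma SupIn i (X : topologicalType) (H : set (otop (option X))) :
  is_T i X -> H `<=` Yi i X -> H !=set0 -> UBcond i H -> Yi i X (Stop H).
Proof.
move=> hX HY [t0 H0] hU; split.
- exact: S_emb.
- exact: S_dense hU.
- exact: S_conn hU.
move: hX HY hU H0; case: i => hX HY hU H0;
  have T1 := S_T1 HY H0; case: hX => hX1 hX2; split => //.
- by apply: (S_cr HY H0) => t Ht; exact: (Yi_T (HY _ Ht)).1.
- have reg : forall t, H t -> reg_none t.
    move=> t Ht; apply: reg_of (HY _ Ht) _.
    exact: (proj1 (@normal_openP Rdefinitions.R _) (Yi_T (HY _ Ht)).1).
  apply/(@normal_openP Rdefinitions.R); apply: sepcl_of_hn_setT.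
  apply: GenSep HY reg _; apply: hn_setT_of_sepcl.
  exact: (proj1 (@normal_openP Rdefinitions.R _) hX1).
- have reg : forall t, H t -> reg_none t.
    move=> t Ht; apply: reg_of (HY _ Ht) _.
    by apply: sepcl_of_hn_setT; exact: (Yi_T (HY _ Ht)).1.
  by move=> Z; apply: GenSep HY reg _; exact: hX1.
Qed.

Lemma lub_ex i (X : topologicalType) (H : set (otop (option X))) :
  is_T i X -> H `<=` Yi i X -> H !=set0 -> UBcond i H ->
  is_lub (@conn_le X) (Yi i X) H (Stop H).
Proof.
move=> hX HY Hne hU; have PS := SupIn hX HY Hne hU.
split.
  split => // h Hh; apply: le_of_finer; exact: finer_S HY Hh.
move=> v [Pv hv]; apply: le_of_finer => V oV.
have [VN|nVN] := pselect (V None); last exact: nonefree Pv oV.1 nVN.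
have [s w c] := oV.2 VN.
apply: (uopen Pv _ oV (wit_icapN w) (fun _ => c)) => p Hp.
have [Hp1 op _] := w p Hp.
exact: finer_of_le (HY _ Hp1) Pv (hv _ Hp1) _ op.
Qed.

Lemma UB_of i (X : topologicalType) (H : set (otop (option X))) u :
  H `<=` Yi i X -> is_upper_bound (@conn_le X) (Yi i X) H u -> UBcond i H.
Proof.
move=> HY [Pu hu] s w; exists u => // p Hp.
have [Hp1 _ _] := w p Hp.
exact: finer_of_le (HY _ Hp1) Pu (hu _ Hp1).
Qed.

Lemma finite_In (T U : Type) (s : seq (T * U)) :
  finite_set (fun t => exists W, List.In (t, W) s).
Proof.
elim: s => [|a s IH].
  have -> : (fun t : T => exists W : U, List.In (t, W) nil) = set0.
    by apply/seteqP; split => // t [].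
  exact: finite_set0.
apply: (@sub_finite_set _ _ ([set a.1] `|` (fun t => exists W, List.In (t, W) s))).
  move=> t [W [e|Hin]]; [left; by rewrite e | right; by exists W].
by rewrite finite_setU; split => //; exact: finite_set1.
Qed.

Theorem theorem3p2 (i : sep_index) (X : topologicalType) :
  locally_connected_space X -> locally_compact [set: X] -> is_T i X ->
  compact_cc_lattice (@conn_le X) (Yi i X).
Proof.
move=> _ _ hX.
have ccl : conditionally_complete_lattice (@conn_le X) (Yi i X).
  split.
  - split.
    + by move=> a Pa; apply: le_of_finer.
    + move=> a b c Pa Pb Pc ab bc; apply: le_of_finer => V oV.
      exact: (finer_of_le Pb Pc bc (finer_of_le Pa Pb ab oV)).
    + move=> a b Pa Pb ab ba; apply: otop_ext => V; split.
        exact: (@finer_of_le _ _ _ _ Pa Pb ab V).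
      exact: (@finer_of_le _ _ _ _ Pb Pa ba V).
  - move=> H HP Hne [u ub]; exists (Stop H).
    exact: lub_ex hX HP Hne (UB_of HP ub).
  - move=> H HP Hne [l lb].
    pose L := is_lower_bound (@conn_le X) (Yi i X) H.
    have LP : L `<=` Yi i X by move=> v [].
    have [h0 H0] := Hne.
    have ubL : is_upper_bound (@conn_le X) (Yi i X) L h0.
      by split; [exact: HP | move=> v [_ hv]; exact: hv].
    have [[PS uS] lS] := lub_ex hX LP (ex_intro _ l lb) (UB_of LP ubL).
    exists (Stop L); split.
      split => // h Hh; apply: lS; split; first exact: HP.
      by move=> v [_ hv]; exact: hv.
    by move=> v hv; exact: uS.
split => // H HP nlub.
apply: contrapT => hall.
have [Hne|He] := pselect (H !=set0).
  apply: nlub; exists (Stop H); apply: (lub_ex hX HP Hne) => s w.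
  pose H' := fun t => exists W, List.In (t, W) s.
  have H'H : H' `<=` H by move=> t [W Hin]; have [] := w _ Hin.
  have : has_lub (@conn_le X) (Yi i X) H'.
    apply: contrapT => nh; apply: hall; exists H'; first exact: finite_In.
    by split.
  move=> [u [[Pu hu] _]]; exists u => // p Hp.
  have [Hp1 _ _] := w p Hp.
  apply: (finer_of_le (HP _ Hp1) Pu (hu _ _)).
  by exists p.2; case: p Hp {Hp1}.
apply: hall; exists H.
  have -> : H = set0 by apply/seteqP; split => // x Hx; apply: He; exists x.
  exact: finite_set0.
by split.
Qed.
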